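(* Let $l\le d/2$ and let $\mathbf{N}=(N_1,\dots,N_{l+1})$ be a POVM on $\mathbb{C}^d$ with $N_i=A_i\ket{\psi_i}\bra{\psi_i}$ for $i\in[l]$, where $\ket{\psi_i}$ are unit vectors and $A_i\ge0$. Let $W=\mathrm{span}_{\mathbb{C}}\{\ket{\psi_i}:i\in[l]\}$, $W^\perp$ its orthogonal complement with orthogonal projector $\mathbb{P}_{W^\perp}$, and $|W^\perp|$ its dimension. Define $F_i=A_i\ket{\psi_i}\bra{\psi_i}+\frac{1-A_i}{|W^\perp|}\mathbb{P}_{W^\perp}$ for $i\in[l]$ and $F_{l+1}=\mathbb{I}_d-\sum_{i=1}^lF_i$. Then $\mathbf{F}=(F_1,\dots,F_{l+1})$ is a POVM and $\mathbf{F}\in\mathrm{SP}(d)$.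
   Context: A POVM on $\mathbb{C}^d$ is a tuple of positive semidefinite operators summing to $\mathbb{I}_d$; projective if $M_iM_j=\delta_{ij}M_i$. A classical post-processing (numbers $q_{i|j}\ge0$, $\sum_iq_{i|j}=1$) maps effects $M_j$ to $\sum_jq_{i|j}M_j$. $\mathrm{SP}(d)$ is the set of finite effect-wise convex combinations of post-processed projective measurements on $\mathbb{C}^d$. *)

(* Defs.v *)
(* Complex scalars: an arbitrary numClosedFieldType C
   (e.g. algC, or complex R for R : rcfType), which covers C = complex numbers. *)
From HB Require Import structures.
From mathcomp Require Import all_boot all_order all_algebra.
From mathcomp Require Import sesquilinear spectral.
Set Implicit Arguments. Unset Strict Implicit. Unset Printing Implicit Defensive.
Import Order.TTheory GRing.Theory Num.Theory Num.Def.
Local Open Scope ring_scope.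
Local Open Scope sesquilinear_scope.

(* CONVENTION: vectors of C^d are ROW vectors 'rV[C]_d and an operator is a
   matrix M acting by right multiplication v |-> v *m M (the convention of
   mathcomp's spectral.v, where proj_ortho lives). Inner product
   <u,v> = (u *m v^t* ) 0 0 (linear in u, antilinear in v). *)

Section QDefs.
Variable C : numClosedFieldType.

Definition ketbra d (psi : 'rV[C]_d) : 'M[C]_d := psi^t* *m psi.

Definition unit_vec d (psi : 'rV[C]_d) : Prop := (psi *m psi^t*) 0 0 = 1.

Definition psdmx d (M : 'M[C]_d) : Prop :=
  M^t* = M /\ forall v : 'rV[C]_d, 0 <= (v *m M *m v^t*) 0 0.

Definition POVM d n (M : 'I_n -> 'M[C]_d) : Prop :=
  (forall i, psdmx (M i)) /\ \sum_(i < n) M i = 1%:M.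

Definition projective d n (M : 'I_n -> 'M[C]_d) : Prop :=
  forall i j, M i *m M j = if i == j then M i else 0.

(* SP(d): finite effect-wise convex combinations of classical
   post-processings of projective measurements. *)
Definition SP d k (F : 'I_k -> 'M[C]_d) : Prop :=
  exists (m : nat) (p : 'I_m -> C) (ns : 'I_m -> nat)
         (P : forall t : 'I_m, 'I_(ns t) -> 'M[C]_d)
         (q : forall t : 'I_m, 'I_k -> 'I_(ns t) -> C),
    (forall t, 0 <= p t) /\ \sum_(t < m) p t = 1 /\
    (forall t, POVM (P t) /\ projective (P t)) /\
    (forall t i j, 0 <= q t i j) /\
    (forall t j, \sum_(i < k) q t i j = 1) /\
    (forall i, F i = \sum_(t < m) p t *: \sum_(j < ns t) q t i j *: P t j).

(* W = span{psi_i}: row space of the matrix with rows psi_i *)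
Definition Wmx d l (psi : 'I_l -> 'rV[C]_d) : 'M[C]_(l, d) :=
  \matrix_(i < l) psi i.
Definition Wperp d l (psi : 'I_l -> 'rV[C]_d) : 'M[C]_d :=
  orthomx conjC 1%:M (Wmx psi).
Definition P_Wperp d l (psi : 'I_l -> 'rV[C]_d) : 'M[C]_d :=
  proj_ortho (Wperp psi).
Definition dim_Wperp d l (psi : 'I_l -> 'rV[C]_d) : nat := \rank (Wperp psi).

Definition Fi d l (A : 'I_l -> C) (psi : 'I_l -> 'rV[C]_d) (i : 'I_l) : 'M[C]_d :=
  A i *: ketbra (psi i) + ((1 - A i) / (dim_Wperp psi)%:R) *: P_Wperp psi.

(* F = (F_1, ..., F_l, F_{l+1}), outcome l+1 being ord_max *)
Definition Fpovm d l (A : 'I_l -> C) (psi : 'I_l -> 'rV[C]_d) (i : 'I_l.+1) : 'M[C]_d :=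
  match unlift ord_max i with
  | Some j => Fi A psi j
  | None => 1%:M - \sum_(j < l) Fi A psi j
  end.

End QDefs.

(* Main.v *)
Require Import Defs.
From HB Require Import structures.
From mathcomp Require Import all_boot all_order all_algebra.
From mathcomp Require Import sesquilinear spectral.
Set Implicit Arguments. Unset Strict Implicit. Unset Printing Implicit Defensive.
Import Order.TTheory GRing.Theory Num.Theory Num.Def.
Local Open Scope ring_scope.
Local Open Scope sesquilinear_scope.

Section Gen.
Variable C : numClosedFieldType.

Lemma ctM m n p (X : 'M[C]_(m, n)) (Y : 'M[C]_(n, p)) :
  (X *m Y)^t* = Y^t* *m X^t*.
Proof. by rewrite trmx_mul map_mxM. Qed.

Lemma ctD m n (X Y : 'M[C]_(m, n)) : (X + Y)^t* = X^t* + Y^t*.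
Proof. by rewrite linearD map_mxD. Qed.

Lemma ctB m n (X Y : 'M[C]_(m, n)) : (X - Y)^t* = X^t* - Y^t*.
Proof. by rewrite linearB map_mxB. Qed.

Lemma ctZ m n a (X : 'M[C]_(m, n)) : (a *: X)^t* = a^* *: X^t*.
Proof. by rewrite linearZ map_mxZ. Qed.

Lemma ct1 n : (1%:M : 'M[C]_n)^t* = 1%:M.
Proof. by rewrite trmx1 map_mx1. Qed.

Lemma ct_sum m n (I : finType) (F : I -> 'M[C]_(m, n)) :
  (\sum_i F i)^t* = \sum_i (F i)^t*.
Proof.
apply/matrixP => a b; rewrite !mxE !summxE rmorph_sum; apply: eq_bigr => i _.
by rewrite !mxE.
Qed.

Lemma ct_delta m n (i : 'I_m) (j : 'I_n) : (delta_mx i j : 'M[C]_(m,n))^t* = delta_mx j i.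
Proof. by apply/matrixP => a b; rewrite !mxE rmorph_nat; congr (_%:R); rewrite andbC. Qed.

Lemma normsq_ge0 n (w : 'rV[C]_n) : 0 <= (w *m w^t*) 0 0.
Proof. by rewrite mxE; apply: sumr_ge0 => j _; rewrite !mxE mul_conjC_ge0. Qed.

Lemma psd_gram m n (X : 'M[C]_(m, n)) : psdmx (X *m X^t*).
Proof.
split; first by rewrite ctM trmxCK.
by move=> v; rewrite !mulmxA -mulmxA -ctM; apply: normsq_ge0.
Qed.

Lemma psd_sum_scale n (T : finType) (p : C) (M : T -> 'M[C]_n) :
  0 <= p -> (forall x, psdmx (M x)) -> psdmx (\sum_x p *: M x).
Proof.
move=> p0 HM; split.
  rewrite ct_sum; apply: eq_bigr => x _.
  by rewrite ctZ geC0_conj //; case: (HM x) => -> _.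
move=> v; rewrite mulmx_sumr mulmx_suml summxE; apply: sumr_ge0 => x _.
by rewrite -scalemxAr -scalemxAl mxE mulr_ge0 //; case: (HM x) => _ ->.
Qed.

Lemma e_form n (a : 'I_n) (M : 'M[C]_n) :
  ((delta_mx 0 a : 'rV[C]_n) *m M *m (delta_mx 0 a : 'rV[C]_n)^t*) 0 0 = M a a.
Proof.
rewrite ct_delta -rowE mxE (bigD1 a) //= big1 => [|j /negbTE ja].
  by rewrite !mxE !eqxx mulr1 addr0.
by rewrite !mxE ja mulr0.
Qed.


Lemma diag_entry n (lam : 'rV[C]_n) a : diag_mx lam a a = lam 0 a.
Proof. by rewrite mxE eqxx mulr1n. Qed.

Lemma sqrt_compl n m (X : 'M[C]_(n, m)) : psdmx (1%:M - X^t* *m X) ->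
  exists R : 'M[C]_n, R *m R^t* = 1%:M - X *m X^t*.
Proof.
move=> HX.
set B := X *m X^t*.
have Bh : B \is hermsymmx by apply/is_hermitianmxP; rewrite expr0 scale1r /B ctM trmxCK.
have /orthomx_spectralP BE := hermitian_normalmx Bh.
have Uu := spectral_unitarymx B.
have lreal := hermitian_spectral_diag_real Bh.
move: BE Uu lreal; set U := spectralmx B; set lam := spectral_diag B => BE Uu lreal.
have UUt : U *m U^t* = 1%:M by apply/unitarymxP.
have UtU : U^t* *m U = 1%:M by rewrite -invmx_unitary // mulVmx // unitarymx_unit.
rewrite invmx_unitary // in BE.
have Dl : U *m B *m U^t* = diag_mx lam.
  by rewrite BE !mulmxA UUt mul1mx -mulmxA UUt mulmx1.
have key a : ((delta_mx 0 a : 'rV[C]_n) *m U *m X) *m ((delta_mx 0 a : 'rV[C]_n) *m U *m X)^t* = (delta_mx 0 a : 'rV[C]_n) *m (U *m B *m U^t*) *m (delta_mx 0 a : 'rV[C]_n)^t*.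
  by rewrite /B !ctM !mulmxA.
have lam_ge0 a : 0 <= lam 0 a.
  by have := normsq_ge0 ((delta_mx 0 a : 'rV[C]_n) *m U *m X); rewrite key Dl e_form diag_entry.
have lam_le a : lam 0 a ^+ 2 <= lam 0 a.
  have := HX.2 ((delta_mx 0 a : 'rV[C]_n) *m U *m X).
  rewrite mulmxBr mulmx1 mulmxBl [X in 0 <= X]mxE [X in _ + X]mxE subr_ge0.
  have -> : (delta_mx 0 a : 'rV[C]_n) *m U *m X *m (X^t* *m X) *m ((delta_mx 0 a : 'rV[C]_n) *m U *m X)^t* =
     (delta_mx 0 a : 'rV[C]_n) *m ((U *m B *m U^t*) *m (U *m B *m U^t*)) *m (delta_mx 0 a : 'rV[C]_n)^t*.
    have E2 : (U *m B *m U^t*) *m (U *m B *m U^t*) = U *m B *m B *m U^t*.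
      by rewrite !mulmxA -[U *m X *m X^t* *m U^t* *m U]mulmxA UtU mulmx1.
    by rewrite E2 /B !ctM !mulmxA.
  by rewrite key Dl mulmx_diag !e_form !diag_entry mxE expr2.
have lam_le1 a : 0 <= 1 - lam 0 a.
  rewrite subr_ge0; have := lam_le a; have := lam_ge0 a.
  rewrite le0r => /orP[/eqP -> _|lp]; first by rewrite ler01.
  by rewrite expr2 -{3}[lam 0 a]mulr1 ler_pM2l.
set mu := \row_a sqrtC (1 - lam 0 a).
have muC : map_mx conjC mu = mu.
  by apply/rowP => a; rewrite !mxE geC0_conj // sqrtC_ge0.
exists (U^t* *m diag_mx mu).
rewrite ctM trmxCK tr_diag_mx map_diag_mx muC.
rewrite -mulmxA [diag_mx mu *m _]mulmxA mulmx_diag.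
have -> : diag_mx (\row_j (mu 0 j * mu 0 j)) = 1%:M - diag_mx lam.
  apply/matrixP => i j; rewrite !mxE -expr2 sqrtCK.
  by case: eqP => [->|_]; rewrite ?mulr1n ?mulr0n ?subr0 // mulrBl mul1r.
by rewrite mulmxBl mul1mx mulmxBr UtU BE mulmxA.
Qed.


Lemma sum_pick (I : finType) (F : I -> C) j : \sum_i F i *+ (i == j) = F j.
Proof.
under eq_bigr do rewrite mulrb.
by rewrite -big_mkcond big_pred1_eq.
Qed.

Section Twirl.
Variable K : nat.
Local Notation SF := {ffun 'I_K.+1 -> bool}.

Definition sgn (s : SF) (a : 'I_K.+1) : C := (-1) ^+ s a.
Definition flip (a : 'I_K.+1) (s : SF) : SF :=
  [ffun x => if x == a then ~~ s x else s x].

Lemma flipK a : involutive (flip a).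
Proof.
by move=> s; apply/ffunP => x; rewrite !ffunE; case: eqP => // _; rewrite negbK.
Qed.

Lemma sum_odd (F : SF -> C) a : (forall s, F (flip a s) = - F s) -> \sum_s F s = 0.
Proof.
move=> HF.
have E : \sum_s F s = - \sum_s F s.
  rewrite -sumrN (reindex_inj (can_inj (flipK a))) /=.
  by apply: eq_bigr => s _; rewrite HF.
have : (\sum_s F s) *+ 2 == 0 by rewrite mulr2n {1}E addNr.
by rewrite mulrn_eq0 /= => /eqP.
Qed.

Lemma sgn_flip_same a s : sgn (flip a s) a = - sgn s a.
Proof. by rewrite /sgn ffunE eqxx signrN. Qed.

Lemma sgn_flip_other a b s : b != a -> sgn (flip a s) b = sgn s b.
Proof. by rewrite /sgn ffunE => /negbTE ->. Qed.

Lemma sum_sgn a : \sum_s sgn s a = 0.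
Proof. by apply: (sum_odd (a := a)) => s; rewrite sgn_flip_same. Qed.

Lemma sgn_conj s a : (sgn s a)^* = sgn s a.
Proof. by rewrite /sgn rmorph_sign. Qed.

Lemma sgn_sq s a : sgn s a * sgn s a = 1.
Proof. by rewrite /sgn -signr_addb addbb. Qed.

Lemma sum_sgn2 a b : \sum_s sgn s a * sgn s b = (#|SF|%:R) *+ (a == b).
Proof.
case: eqP => [->|/eqP ab].
  under eq_bigr do rewrite sgn_sq.
  by rewrite sumr_const mulr1n.
apply: (sum_odd (a := a)) => s.
by rewrite sgn_flip_same sgn_flip_other 1?eq_sym // mulNr.
Qed.

Definition Mt (s : SF) (c : 'I_K.+1) : 'M[C]_K.+1 :=
  \matrix_(a, b) (sgn s a *+ (b == a + c)).

Lemma eq_shift (a i c : 'I_K.+1) : (a == i + c) = (i == a - c).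
Proof. by rewrite [RHS]eq_sym subr_eq. Qed.

Lemma Mt_unitary s c : Mt s c *m (Mt s c)^t* = 1%:M.
Proof.
apply/matrixP => a a'; rewrite !mxE.
under eq_bigr do rewrite !mxE rmorphMn mulrnAr mulrnAl.
rewrite sum_pick /sgn rmorph_sign (inj_eq (addIr c)) eq_sym -/(sgn s a).
by case: eqP => [->|_]; rewrite ?sgn_sq ?mulr0n.
Qed.

Lemma Mt_sum0 : \sum_s \sum_c Mt s c = 0.
Proof.
apply/matrixP => a b; rewrite summxE mxE.
under eq_bigr do rewrite summxE.
rewrite exchange_big /=; apply: big1 => c _.
under eq_bigr do rewrite mxE.
by rewrite sumrMnl sum_sgn mul0rn.
Qed.

Lemma Mt_twirl (Y : 'M[C]_K.+1) :
  \sum_s \sum_c (Mt s c)^t* *m Y *m Mt s c = (#|SF|%:R * \tr Y) *: 1%:M.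
Proof.
apply/matrixP => a b; rewrite summxE !mxE.
have step s c : ((Mt s c)^t* *m Y *m Mt s c) a b =
   Y (a - c) (b - c) * (sgn s (a - c) * sgn s (b - c)).
  rewrite mxE.
  under eq_bigr => j _ do rewrite mxE;
    under eq_bigr => i _ do rewrite !mxE.
  have inner i : \sum_j (Mt s c ^t*) a j * Y j i = sgn s (a - c) * Y (a - c) i.
    under eq_bigr => j _ do rewrite !mxE rmorphMn /sgn rmorph_sign -/(sgn s j) eq_shift mulrnAl.
    by rewrite sum_pick.
  under eq_bigr => i _ do rewrite inner eq_shift mulrnAr.
  by rewrite sum_pick [sgn _ _ * _]mulrC mulrA.
under eq_bigr do rewrite summxE.
under eq_bigr do under eq_bigr do rewrite step.
rewrite exchange_big /=.
under eq_bigr do rewrite -mulr_sumr sum_sgn2 (inj_eq (addIr _)).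
case: eqP => [<-|_]; last first.
  by rewrite mulr0; apply: big1 => c _; rewrite mulr0.
rewrite mulr1n -mulr_suml mulr1 mulrC /mxtrace; congr (_ * _).
by rewrite [RHS](reindex_inj (subrI a)) /=; apply: eq_bigr => c _.
Qed.

End Twirl.

Lemma sum_delta n : \sum_(i < n) (delta_mx i i : 'M[C]_n) = 1%:M.
Proof.
apply/matrixP => a b; rewrite summxE !mxE.
under eq_bigr => i _ do rewrite mxE.
rewrite (bigD1 a) //= big1 => [|i /negbTE ia]; last by rewrite eq_sym ia.
by rewrite eqxx addr0 /= eq_sym.
Qed.

Lemma tr_delta_mul n (i : 'I_n) (X : 'M[C]_n) : \tr (delta_mx i i *m X) = X i i.
Proof.
rewrite /mxtrace (bigD1 i) //= big1 => [|j /negbTE ji].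
  by rewrite addr0 mxE (bigD1 i) //= big1 => [|a /negbTE ai]; rewrite !mxE ?eqxx ?mul1r ?addr0 // ai mul0r.
by rewrite mxE big1 // => a _; rewrite !mxE ji mul0r.
Qed.

Lemma gram_rows m n (X : 'M[C]_(m, n)) : X^t* *m X = \sum_i (row i X)^t* *m row i X.
Proof.
apply/matrixP => a b; rewrite summxE !mxE; apply: eq_bigr => i _.
by rewrite !mxE big_ord1 !mxE.
Qed.

Lemma sum2_mul (I J : finType) m n p q (X : 'M[C]_(m, n)) (F : I -> J -> 'M[C]_(n, p)) (Y : 'M[C]_(p, q)) :
  \sum_i \sum_j X *m F i j *m Y = X *m (\sum_i \sum_j F i j) *m Y.
Proof.
rewrite mulmx_sumr mulmx_suml; apply: eq_bigr => i _.
by rewrite mulmx_sumr mulmx_suml.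
Qed.

End Gen.


Section Main.
Variable C : numClosedFieldType.
Variables (d l : nat) (A : 'I_l -> C) (psi : 'I_l -> 'rV[C]_d).

Definition Vmx : 'M[C]_(l, d) := \matrix_i (sqrtC (A i) *: psi i).

Hypothesis HA : forall i, 0 <= A i.
Hypothesis Hpsi : forall i, unit_vec (psi i).

Lemma rowV_ket i : (row i Vmx)^t* *m row i Vmx = A i *: ketbra (psi i).
Proof.
rewrite rowK ctZ -scalemxAl -scalemxAr scalerA geC0_conj ?sqrtC_ge0 //.
by rewrite -expr2 sqrtCK.
Qed.

Lemma VV_diag i : (Vmx *m Vmx^t*) i i = A i.
Proof.
have := Hpsi i; rewrite /unit_vec => H.
have -> : (Vmx *m Vmx^t*) i i = ((row i Vmx) *m (row i Vmx)^t*) 0 0.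
  by rewrite !mxE; apply: eq_bigr => j _; rewrite !mxE.
rewrite rowK ctZ -scalemxAl -scalemxAr scalerA geC0_conj ?sqrtC_ge0 //.
by rewrite -expr2 sqrtCK mxE H mulr1.
Qed.

Variables (k : nat) (E : 'M[C]_(k.+1, d)) (R : 'M[C]_l).
Hypothesis HE : E *m E^t* = 1%:M.
Hypothesis HEP : E^t* *m E = P_Wperp psi.
Hypothesis HVE : Vmx *m E^t* = 0.
Hypothesis HR : R *m R^t* = 1%:M - Vmx *m Vmx^t*.
Hypothesis Hlk : (l <= k.+1)%N.
Hypothesis Hdim : dim_Wperp psi = k.+1.

Local Notation SF := {ffun 'I_k.+1 -> bool}.

Definition Gmx : 'M[C]_(l, k.+1) := R *m pid_mx l.

Lemma GG : Gmx *m Gmx^t* = R *m R^t*.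
Proof.
rewrite /Gmx ctM.
have -> : (pid_mx l : 'M[C]_(l, k.+1))^t* = pid_mx l.
  apply/matrixP => i j; rewrite !mxE rmorph_nat eq_sym.
  by case: eqP => // ->.
rewrite -mulmxA [pid_mx l *m _]mulmxA mul_pid_mx minnn.
by rewrite (minn_idPr Hlk) pid_mx_1 mul1mx.
Qed.

Definition Phi (s : SF) c : 'M[C]_(l, d) := Vmx + Gmx *m Mt C s c *m E.

Lemma EV : E *m Vmx^t* = 0.
Proof. by rewrite -[E]trmxCK -ctM HVE; apply/matrixP => i j; rewrite !mxE rmorph0. Qed.

Lemma Phi_unit s c : Phi s c *m (Phi s c)^t* = 1%:M.
Proof.
rewrite /Phi ctD !ctM mulmxDl !mulmxDr.
rewrite !mulmxA HVE !mul0mx addr0.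
rewrite -[Gmx *m Mt C s c *m E *m Vmx^t*]mulmxA EV mulmx0 add0r.
rewrite -[Gmx *m Mt C s c *m E *m E^t*]mulmxA HE mulmx1.
rewrite -[Gmx *m Mt C s c *m (Mt C s c)^t*]mulmxA Mt_unitary mulmx1 -mulmxA -ctM -/Gmx GG HR.
by rewrite addrC subrK.
Qed.

Definition Pi s c (j : 'I_l.+1) : 'M[C]_d :=
  match unlift ord_max j with
  | Some i => (Phi s c)^t* *m delta_mx i i *m Phi s c
  | None => 1%:M - (Phi s c)^t* *m Phi s c
  end.

Lemma widen_lift (i : 'I_l) : widen_ord (leqnSn l) i = lift ord_max i.
Proof. by apply: val_inj; rewrite /= /bump leqNgt ltn_ord. Qed.

Lemma Pi_lift s c i : Pi s c (lift ord_max i) = (Phi s c)^t* *m delta_mx i i *m Phi s c.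
Proof. by rewrite /Pi liftK. Qed.

Lemma Pi_max s c : Pi s c ord_max = 1%:M - (Phi s c)^t* *m Phi s c.
Proof. by rewrite /Pi unlift_none. Qed.

Lemma PhiPhi s c : (Phi s c)^t* *m Phi s c = \sum_i (Phi s c)^t* *m delta_mx i i *m Phi s c.
Proof. by rewrite -mulmx_suml -mulmx_sumr sum_delta mulmx1. Qed.

Lemma Pi_povm s c : POVM (Pi s c) /\ projective (Pi s c).
Proof.
have PU := Phi_unit s c.
set P := Phi s c in PU *.
have Q2 : (1%:M - P^t* *m P) *m (1%:M - P^t* *m P) = 1%:M - P^t* *m P.
  rewrite mulmxBr mulmx1 mulmxBl mul1mx !mulmxA -[P^t* *m P *m P^t*]mulmxA PU mulmx1.
  by rewrite subrr subr0.
split; [split|].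
- move=> j; case: (unliftP ord_max j) => [i ->|->]; rewrite ?Pi_lift ?Pi_max.
    have -> : P^t* *m delta_mx i i *m P =
              (P^t* *m (delta_mx i (0 : 'I_1) : 'M[C]_(l,1))) *m (P^t* *m (delta_mx i (0 : 'I_1) : 'M[C]_(l,1)))^t*.
      by rewrite ctM ct_delta trmxCK mulmxA -[P^t* *m _ *m delta_mx 0 i]mulmxA mul_delta_mx.
    exact: psd_gram.
  have -> : 1%:M - P^t* *m P = (1%:M - P^t* *m P) *m (1%:M - P^t* *m P)^t*.
    by rewrite ctB ct1 ctM trmxCK Q2.
  exact: psd_gram.
- rewrite big_ord_recr /=.
  under eq_bigr do rewrite widen_lift Pi_lift.
  by rewrite Pi_max -/P -PhiPhi addrC subrK.
- move=> j j'.
  case: (unliftP ord_max j) => [i ->|->]; case: (unliftP ord_max j') => [i' ->|->];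
    rewrite ?Pi_lift ?Pi_max.
  + rewrite (inj_eq (@lift_inj _ ord_max)) !mulmxA -[P^t* *m _ *m P *m P^t*]mulmxA PU mulmx1.
    rewrite -[P^t* *m delta_mx i i *m delta_mx i' i']mulmxA mul_delta_mx_cond.
    by case: eqP => [->|_]; rewrite ?mulr1n ?mulmxA // mulr0n mulmx0 mul0mx.
  + rewrite eq_sym (negbTE (neq_lift _ _)) mulmxBr mulmx1 !mulmxA.
    by rewrite -[P^t* *m _ *m P *m P^t*]mulmxA PU mulmx1 subrr.
  + rewrite (negbTE (neq_lift _ _)) mulmxBl mul1mx !mulmxA.
    by rewrite -[P^t* *m P *m P^t*]mulmxA PU mulmx1 subrr.
  + by rewrite eqxx Q2.
Qed.

Lemma Pi_avg i : \sum_(s : SF) \sum_c Pi s c (lift ord_max i) =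
  (#|SF| * k.+1)%:R *: (A i *: ketbra (psi i)) + (#|SF|%:R * (1 - A i)) *: P_Wperp psi.
Proof.
set D := (delta_mx i i : 'M[C]_l).
have ex s c : (Phi s c)^t* *m D *m Phi s c =
   Vmx^t* *m D *m Vmx + E^t* *m (Mt C s c)^t* *m (Gmx^t* *m D *m Vmx) +
   ((Vmx^t* *m D *m Gmx) *m Mt C s c *m E +
    E^t* *m ((Mt C s c)^t* *m (Gmx^t* *m D *m Gmx) *m Mt C s c) *m E).
  by rewrite /Phi ctD !ctM mulmxDl !mulmxDr !mulmxDl !mulmxA.
under eq_bigr do under eq_bigr do rewrite Pi_lift ex.
under eq_bigr do rewrite !big_split /=.
rewrite !big_split /=.
have h1 : \sum_(s : SF) \sum_c Vmx^t* *m D *m Gmx *m Mt C s c *m E = 0.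
  by rewrite sum2_mul Mt_sum0 mulmx0 mul0mx.
have h2 : \sum_(s : SF) \sum_c E^t* *m (Mt C s c)^t* *m (Gmx^t* *m D *m Vmx) = 0.
  rewrite sum2_mul.
  have -> : \sum_(s : SF) \sum_c (Mt C s c)^t* = 0.
    under eq_bigr do rewrite -ct_sum.
    by rewrite -ct_sum Mt_sum0; apply/matrixP => a b; rewrite !mxE rmorph0.
  by rewrite mulmx0 mul0mx.
have h3 : \sum_(s : SF) \sum_c E^t* *m ((Mt C s c)^t* *m (Gmx^t* *m D *m Gmx) *m Mt C s c) *m E
   = (#|SF|%:R * \tr (Gmx^t* *m D *m Gmx)) *: P_Wperp psi.
  by rewrite sum2_mul Mt_twirl -scalemxAr mulmx1 -scalemxAl HEP.
rewrite h1 h2 h3 add0r addr0.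
under eq_bigr do rewrite sumr_const card_ord.
rewrite sumr_const -mulrnA -scaler_nat mulnC.
have -> : Vmx^t* *m D *m Vmx = A i *: ketbra (psi i).
  have -> : D = (delta_mx i (0 : 'I_1) : 'M[C]_(l, 1)) *m delta_mx 0 i by rewrite mul_delta_mx.
  by rewrite -rowV_ket !rowE ctM ct_delta !mulmxA.
congr (_ + _); congr (_ *: _); congr (_ * _).
rewrite -!mulmxA mxtrace_mulC -mulmxA GG HR mulmxBr mulmx1 linearB /=.
by rewrite -{1}[D]mulmx1 !tr_delta_mul VV_diag mxE eqxx.
Qed.

Definition Nt := (#|SF| * k.+1)%N.

Lemma SF_gt0 : (0 < #|SF|)%N.
Proof. by rewrite card_ffun card_bool card_ord expn_gt0. Qed.

Lemma Nt_neq0 : (Nt%:R : C) != 0.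
Proof. by rewrite pnatr_eq0 muln_eq0 negb_or -lt0n SF_gt0. Qed.

Lemma Fi_rep i : Fi A psi i = \sum_(s : SF) \sum_c (Nt%:R^-1 *: Pi s c (lift ord_max i)).
Proof.
under eq_bigr do rewrite -scaler_sumr.
rewrite -scaler_sumr Pi_avg scalerDr !scalerA -/Nt mulrA mulVf ?Nt_neq0 // mul1r.
rewrite /Fi Hdim; congr (_ + _ *: _).
have SFn0 : (#|SF|%:R : C) != 0 by rewrite pnatr_eq0 -lt0n SF_gt0.
rewrite /Nt natrM invfM [_^-1 * _^-1]mulrC -mulrA mulKf // mulrC.
by [].
Qed.

Lemma F_rep j : Fpovm A psi j = \sum_(s : SF) \sum_c (Nt%:R^-1 *: Pi s c j).
Proof.
case: (unliftP ord_max j) => [i ->|->].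
  by rewrite /Fpovm liftK Fi_rep.
rewrite /Fpovm unlift_none.
have -> : \sum_(s : SF) \sum_c Nt%:R^-1 *: Pi s c ord_max =
   Nt%:R^-1 *: (\sum_(s : SF) \sum_c (1%:M - \sum_i Pi s c (lift ord_max i))).
  rewrite scaler_sumr; apply: eq_bigr => s _; rewrite scaler_sumr; apply: eq_bigr => c _.
  rewrite Pi_max PhiPhi; congr (_ *: (_ - _)); apply: eq_bigr => i _.
  by rewrite Pi_lift.
have -> : \sum_(s : SF) \sum_c (1%:M - \sum_i Pi s c (lift ord_max i)) =
   Nt%:R *: 1%:M - \sum_i \sum_(s : SF) \sum_c Pi s c (lift ord_max i).
  under eq_bigr do rewrite sumrB sumr_const card_ord.
  rewrite sumrB sumr_const -mulrnA -scaler_nat mulnC; congr (_ - _).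
  rewrite [RHS]exchange_big /=; apply: eq_bigr => s _.
  by rewrite [RHS]exchange_big.
rewrite scalerBr scalerA mulVf ?Nt_neq0 // scale1r scaler_sumr.
by congr (_ - _); apply: eq_bigr => i _; rewrite Fi_rep scaler_sumr; apply: eq_bigr => s _; rewrite scaler_sumr.
Qed.

End Main.


Section Wrap.
Variable C : numClosedFieldType.
Variables (d l : nat) (psi : 'I_l -> 'rV[C]_d).

Definition Emx := schmidt (row_base (Wperp psi)).

Lemma EU : (Emx :=: Wperp psi)%MS.
Proof.
exact: eqmx_trans (eqmx_schmidt_free (row_base_free _)) (eq_row_base _).
Qed.

Lemma E_unit : Emx *m Emx^t* = 1%:M.
Proof. by apply/unitarymxP; apply: schmidt_unitarymx; rewrite rank_leq_col. Qed.

Lemma E_orth : Emx *m (Wmx psi)^t* = 0.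
Proof. apply/orthomx1P. by rewrite EU. Qed.

Lemma E_proj : Emx^t* *m Emx = P_Wperp psi.
Proof.
set P := P_Wperp psi; set X := Emx^t* *m Emx.
have h1 : P *m X = P.
  have : (P <= Emx)%MS.
    by rewrite EU -[P]mul1mx /P /P_Wperp proj_ortho_sub.
  case/submxP => Y ->.
  by rewrite /X !mulmxA -[Y *m Emx *m Emx^t*]mulmxA E_unit mulmx1.
have h2 : (1%:M - P) *m X = 0.
  have : (1%:M - P <= orthomx conjC 1%:M Emx)%MS.
    rewrite (eqmx_ortho _ EU).
    by rewrite -{1}[P]mul1mx /P /P_Wperp proj_ortho_compl_sub.
  by move/orthomx1P; rewrite /X mulmxA => ->; rewrite mul0mx.
by rewrite -[X]mul1mx -[1%:M](subrK P) mulmxDl h1 h2 add0r.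
Qed.

End Wrap.

Section Final.
Variable C : numClosedFieldType.

Lemma psd1 d : psdmx (1%:M : 'M[C]_d).
Proof. by have := psd_gram (1%:M : 'M[C]_d); rewrite ct1 mulmx1. Qed.

Lemma triv d (A : 'I_0 -> C) (psi : 'I_0 -> 'rV[C]_d) :
  POVM (Fpovm A psi) /\ SP (Fpovm A psi).
Proof.
have F1 j : Fpovm A psi j = 1%:M.
  rewrite /Fpovm; case: (unliftP ord_max j) => [[]//|_].
  by rewrite big_ord0 subr0.
split.
  by split; [move=> j; rewrite F1; exact: psd1 | rewrite big_ord1 F1].
exists 1%N, (fun _ => 1), (fun _ => 1%N), (fun _ _ => 1%:M), (fun _ _ _ => 1).
split; first by move=> _; exact: ler01.
split; first by rewrite big_ord1.
split.
  move=> t; split; first by split; [move=> _; exact: psd1 | rewrite big_ord1].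
  by move=> i j; rewrite !ord1 eqxx mulmx1.
split; first by move=> *; exact: ler01.
split; first by move=> *; rewrite big_ord1.
by move=> i; rewrite F1 big_ord1 big_ord1 !scale1r.
Qed.

End Final.

Section Final2.
Variable C : numClosedFieldType.

Lemma sum_pickV (V : nmodType) (I : finType) (F : I -> V) j : \sum_i F i *+ (i == j) = F j.
Proof.
under eq_bigr do rewrite mulrb.
by rewrite -big_mkcond big_pred1_eq.
Qed.

Lemma main_case d l (A : 'I_l -> C) (psi : 'I_l -> 'rV[C]_d) k (E : 'M[C]_(k.+1, d)) (R : 'M[C]_l) :
  (forall i, 0 <= A i) -> (forall i, unit_vec (psi i)) ->
  E *m E^t* = 1%:M -> E^t* *m E = P_Wperp psi -> Vmx A psi *m E^t* = 0 ->
  R *m R^t* = 1%:M - Vmx A psi *m (Vmx A psi)^t* -> (l <= k.+1)%N ->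
  dim_Wperp psi = k.+1 ->
  POVM (Fpovm A psi) /\ SP (Fpovm A psi).
Proof.
move=> HA Hpsi HE HEP HVE HR Hlk Hdim.
have FR := F_rep HA Hpsi HEP HR Hlk Hdim.
have PP s c : POVM (Pi A psi E R s c) /\ projective (Pi A psi E R s c).
  by apply: Pi_povm.
have Nt0 : (Nt k)%:R != 0 :> C by apply: Nt_neq0.
split.
  split.
    move=> j; rewrite FR pair_bigA /=; apply: psd_sum_scale.
      by rewrite invr_ge0 ler0n.
    by move=> [s c]; case: (PP s c) => [[]].
  rewrite big_ord_recr /= /Fpovm unlift_none.
  under eq_bigr do rewrite widen_lift liftK.
  by rewrite addrC subrK.
exists #|{: ({ffun 'I_k.+1 -> bool} * 'I_k.+1)%type}|, (fun _ => (Nt k)%:R^-1), (fun _ => l.+1),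
  (fun t => Pi A psi E R (enum_val t).1 (enum_val t).2), (fun _ i j => (i == j)%:R).
split; first by move=> _; rewrite invr_ge0 ler0n.
split.
  rewrite sumr_const card_ord card_prod card_ord.
  change ((Nt k)%:R^-1 *+ Nt k = 1 :> C).
  by rewrite -[LHS]mulr_natr mulVf.
split; first by move=> t; apply: PP.
split; first by move=> *; exact: ler0n.
split; first by move=> t j; rewrite (sum_pickV (fun _ => (1 : C))).
move=> i; rewrite FR pair_bigA /= (big_enum_val (A := {: ({ffun 'I_k.+1 -> bool} * 'I_k.+1)%type})) /=.
apply: eq_bigr => t _; congr (_ *: _).
under eq_bigr do rewrite scaler_nat eq_sym.
by rewrite sum_pickV.
Qed.

End Final2.

From mathcomp Require Import zify.

Theorem theorem6 (C : numClosedFieldType) (d l : nat) (A : 'I_l -> C)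
    (psi : 'I_l -> 'rV[C]_d) (N : 'I_l.+1 -> 'M[C]_d) :
  (2 * l <= d)%N ->
  (forall i, unit_vec (psi i)) ->
  (forall i, 0 <= A i) ->
  POVM N ->
  (forall i : 'I_l, N (widen_ord (leqnSn l) i) = A i *: ketbra (psi i)) ->
  POVM (Fpovm A psi) /\ SP (Fpovm A psi).
Proof.
move=> hl Hpsi HA [HNpsd HNsum] HN.
have VtV : (Vmx A psi)^t* *m Vmx A psi = \sum_i A i *: ketbra (psi i).
  by rewrite gram_rows; apply: eq_bigr => i _; rewrite rowV_ket.
have Nmax : N ord_max = 1%:M - (Vmx A psi)^t* *m Vmx A psi.
  move: HNsum; rewrite big_ord_recr /=.
  under eq_bigr do rewrite HN.
  by move=> <-; rewrite VtV [_ + N ord_max]addrC addrK.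
have [R HR] : exists R : 'M[C]_l, R *m R^t* = 1%:M - Vmx A psi *m (Vmx A psi)^t*.
  by apply: sqrt_compl; rewrite -Nmax; exact: HNpsd.
have rk : \rank (Wperp psi) = (d - \rank (Wmx psi))%N by apply: rank_ortho.
have rW : (\rank (Wmx psi) <= l)%N := rank_leq_row _.
have Hlk : (l <= \rank (Wperp psi))%N by rewrite rk; lia.
have VE : Vmx A psi *m (Emx psi)^t* = 0.
  have -> : Vmx A psi = diag_mx (\row_i sqrtC (A i)) *m Wmx psi.
    by apply/matrixP => i j; rewrite mul_diag_mx !mxE.
  rewrite -mulmxA.
  have -> : Wmx psi *m (Emx psi)^t* = 0.
    by rewrite -[Wmx psi]trmxCK -ctM E_orth; apply/matrixP => i j; rewrite !mxE rmorph0.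
  by rewrite mulmx0.
case: l A psi N hl Hpsi HA HNpsd HNsum HN VtV Nmax R HR rk rW Hlk VE => [|l'] A psi N hl Hpsi HA HNpsd HNsum HN VtV Nmax R HR rk rW Hlk VE.
  exact: triv.
have key : forall r (E : 'M[C]_(r, d)), E *m E^t* = 1%:M -> E^t* *m E = P_Wperp psi ->
   Vmx A psi *m E^t* = 0 -> (l'.+1 <= r)%N -> dim_Wperp psi = r ->
   POVM (Fpovm A psi) /\ SP (Fpovm A psi).
  move=> [|k] E HE HEP HVE Hl Hd //.
  exact: (main_case HA Hpsi HE HEP HVE HR Hl Hd).
exact: (key _ (Emx psi) (E_unit psi) (E_proj psi) VE Hlk erefl).
Qed.
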